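(* Let $W:\mathbb{R}\to\mathbb{R}$ be an AWGN channel with noise variance $\sigma_W^2>0$, i.e. for input $x$ the output is distributed as $\mathcal{N}(x,\sigma_W^2)$. Let $P>0$ and, for each $n$, let $e_{0,n}:\{0,1\}^{l_n}\to\mathbb{R}^n$ be an encoder satisfying $\frac1n\|e_{0,n}(v)\|_2^2\le P$ for all $v\in\{0,1\}^{l_n}$. Let $W_{e_{0,n}}:\{0,1\}^{l_n}\to\mathbb{R}^n$ be the channel whose output given input $v$ is $e_{0,n}(v)+N$ with $N\sim\mathcal{N}(0,\sigma_W^2 I_n)$. Then for every $0<\delta<1/2$, with $\epsilon_n=e^{-n\delta^2/8}$, \[ I_{\max}^{\epsilon_n}(W_{e_{0,n}})\le \frac n2\log\Big(1+\delta+\frac{P}{\sigma_W^2}\Big)+\frac{n\delta\log e}{2}+o(n)\quad\text{as } n\to\infty, \] with logarithms to base 2.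
   Context: For a (possibly subnormalized) channel $V$ from a finite set $\mathcal{V}$ to $\mathbb{R}^n$ with densities $\omega(z\mid v)$ w.r.t. Lebesgue measure, its max-information is $I_{\max}(V)=\log_2\int_{\mathbb{R}^n}\max_{v\in\mathcal{V}}\omega(z\mid v)\,dz$. For measurable $\mathcal{T}\subseteq\mathcal{V}\times\mathbb{R}^n$, $V_{\mathcal{T}}$ is the subnormalized channel with density $\omega_{\mathcal{T}}(z\mid v)=\omega(z\mid v)$ if $(v,z)\in\mathcal{T}$ and $0$ otherwise. The $\epsilon$-smooth max-information $I_{\max}^{\epsilon}(V)$ is the infimum of $I_{\max}(V_{\mathcal{T}})$ over all such $\mathcal{T}$ with $V(\{z:(v,z)\in\mathcal{T}\}\mid v)\ge 1-\epsilon$ for every $v\in\mathcal{V}$. *)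

(* Defs.v *)
From HB Require Import structures.
From mathcomp Require Import all_boot all_order all_algebra.
From mathcomp Require Import all_classical all_reals all_analysis.

Set Implicit Arguments.
Unset Strict Implicit.
Unset Printing Implicit Defensive.

Import Order.TTheory GRing.Theory Num.Theory.
Local Open Scope classical_set_scope.
Local Open Scope ring_scope.

Section Defs.
Variable R : realType.

Definition log2 (x : R) : R := ln x / ln 2.

Definition elog2 (x : \bar R) : \bar R :=
  match x with
  | EFin r => if (0 < r)%R then EFin (log2 r) else -oo
  | +oo => +oo
  | -oo => -oo
  end%E.

(** Lebesgue integral over R^n (points of R^n are n-tuples), written as the
    iterated integral of the one-dimensional Lebesgue measure. For the
    nonnegative measurable integrands used below this is the integral
    w.r.t. n-dimensional Lebesgue measure (Tonelli). *)
Fixpoint int_Rn (n : nat) : (n.-tuple R -> \bar R) -> \bar R :=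
  match n return (n.-tuple R -> \bar R) -> \bar R with
  | 0 => fun f => f [tuple]
  | m.+1 => fun f =>
      (\int[@lebesgue_measure R]_(x in setT)
         int_Rn (fun t : m.-tuple R => f (cons_tuple x t)))%E
  end.

(** max-information of a (possibly subnormalized) channel V -> R^n given by
    densities w v z = omega(z | v) *)
Definition Imax (V : finType) (n : nat) (w : V -> n.-tuple R -> R) : \bar R :=
  elog2 (int_Rn (fun z => (\big[Num.max/0]_(v : V) w v z)%:E)).

(** restriction V_T of the channel to T, where T \subseteq V x R^n is given
    by its sections T v = {z | (v, z) \in T} *)
Definition restr_ch (V : finType) (n : nat) (w : V -> n.-tuple R -> R)
  (T : V -> set (n.-tuple R)) : V -> n.-tuple R -> R :=
  fun v z => \1_(T v) z * w v z.

Definition ch_prob (V : finType) (n : nat) (w : V -> n.-tuple R -> R)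
  (v : V) (A : set (n.-tuple R)) : \bar R :=
  int_Rn (fun z => (\1_A z * w v z)%:E).

Definition smooth_Imax (V : finType) (n : nat) (eps : R)
  (w : V -> n.-tuple R -> R) : \bar R :=
  ereal_inf [set Imax (restr_ch w T) | T in
    [set T : V -> set (n.-tuple R) |
      (forall v, measurable (T v)) /\
      (forall v, ((1 - eps)%:E <= ch_prob w v (T v))%E)]].

Definition awgn_ch (sigma2 : R) (V : finType) (n : nat)
  (e : V -> n.-tuple R) : V -> n.-tuple R -> R :=
  fun v z => \prod_(i < n)
     normal_pdf (tnth (e v) i) (Num.sqrt sigma2) (tnth z i).

End Defs.

(* Main.v *)
Require Import Defs.
From HB Require Import structures.
From mathcomp Require Import all_boot all_order all_algebra.
From mathcomp Require Import all_classical all_reals all_analysis.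
From mathcomp Require Import measurable_realfun.
From mathcomp Require Import ring lra.

Import Order.TTheory GRing.Theory Num.Theory.
Local Open Scope classical_set_scope.
Local Open Scope ring_scope.

Section IntRn.
Context {R : realType}.
Local Notation mu := (@lebesgue_measure R).
Local Open Scope ereal_scope.

Lemma int_Rn_ge0 n (f : n.-tuple R -> \bar R) : (forall t, 0 <= f t) -> 0 <= int_Rn f.
Proof.
elim: n f => [|n IH] f f0 /=; first exact: f0.
by apply: integral_ge0 => x _; apply: IH => t.
Qed.

Lemma meas_cons n (x : R) : measurable_fun [set: n.-tuple R] (fun t => cons_tuple x t).
Proof.
have := (@measurable_cons _ _ _ _ (fun _ : n.-tuple R => x) n idfun (measurable_cst x) (@measurable_id _ _ setT)).
exact.
Qed.

Lemma int_Rn_meas n : forall d (X : measurableType d) (f : X * n.-tuple R -> \bar R),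
  measurable_fun setT f -> (forall z, 0 <= f z) ->
  measurable_fun setT (fun x => int_Rn (fun t => f (x, t))).
Proof.
elim: n => [|n IH] d X f mf f0 /=.
  exact: measurable_fun_pair1.
pose H := fun p : X * R => int_Rn (fun t => f (p.1, cons_tuple p.2 t)).
have mH : measurable_fun setT H.
  apply: (IH _ _ (fun q : (X * R) * n.-tuple R => f (q.1.1, cons_tuple q.1.2 q.2))).
  - apply: measurableT_comp => //.
    apply: measurable_fun_pair.
      exact: measurableT_comp.
    have := (@measurable_cons _ _ _ _ (fun q : (X * R) * n.-tuple R => q.1.2) n snd
      (measurableT_comp measurable_snd measurable_fst) measurable_snd).
    exact.
  - by move=> q; apply: f0.
have H0 : forall p, 0 <= H p by move=> p; apply: int_Rn_ge0 => t; apply: f0.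
have := @measurable_fun_fubini_tonelli_F _ _ X (measurableTypeR R) R mu H mH H0.
exact.
Qed.

Lemma meas_cons2 n : measurable_fun [set: (R * n.-tuple R)%type]
  (fun q : R * n.-tuple R => cons_tuple q.1 q.2).
Proof.
have := (@measurable_cons _ _ _ _ (fun q : R * n.-tuple R => q.1) n snd
      measurable_fst measurable_snd).
exact.
Qed.

Lemma int_Rn_meas1 n (f : n.+1.-tuple R -> \bar R) :
  measurable_fun setT f -> (forall z, 0 <= f z) ->
  measurable_fun setT (fun x : R => int_Rn (fun t => f (cons_tuple x t))).
Proof.
move=> mf f0.
have := @int_Rn_meas n _ R (fun q : R * n.-tuple R => f (cons_tuple q.1 q.2)).
apply => //.
exact: (measurableT_comp mf (meas_cons2 n)).
Qed.

Lemma int_Rn_le n (f g : n.-tuple R -> \bar R) :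
  measurable_fun setT f -> measurable_fun setT g ->
  (forall t, 0 <= f t) -> (forall t, f t <= g t) -> int_Rn f <= int_Rn g.
Proof.
elim: n f g => [|n IH] f g mf mg f0 fg /=; first exact: fg.
have g0 t : 0 <= g t by apply: le_trans (fg t).
apply: ge0_le_integral => //.
- by move=> x _; apply: int_Rn_ge0.
- exact: int_Rn_meas1.
- exact: int_Rn_meas1.
- move=> x _; apply: IH => //.
  + exact: (measurableT_comp mf (meas_cons n x)).
  + exact: (measurableT_comp mg (meas_cons n x)).
Qed.

Lemma int_Rn_add n (f g : n.-tuple R -> \bar R) :
  measurable_fun setT f -> measurable_fun setT g ->
  (forall t, 0 <= f t) -> (forall t, 0 <= g t) ->
  int_Rn (fun t => f t + g t) = int_Rn f + int_Rn g.
Proof.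
elim: n f g => [|n IH] f g mf mg f0 g0 //=.
rewrite -ge0_integralD //.
- apply: eq_integral => x _; apply: IH => //.
  + exact: (measurableT_comp mf (meas_cons n x)).
  + exact: (measurableT_comp mg (meas_cons n x)).
- by move=> x _; apply: int_Rn_ge0.
- exact: int_Rn_meas1.
- by move=> x _; apply: int_Rn_ge0.
- exact: int_Rn_meas1.
Qed.


Lemma int_Rn_prod n : forall (c : R) (h : 'I_n -> R -> R) (r : 'I_n -> R),
  (0 <= c)%R -> (forall i x, 0 <= h i x)%R -> (forall i, measurable_fun setT (h i)) ->
  (forall i, \int[mu]_x (h i x)%:E = (r i)%:E) ->
  int_Rn (fun z => (c * \prod_(i < n) h i (tnth z i))%:E) = (c * \prod_(i < n) r i)%:E.
Proof.
elim: n => [|n IH] c h r c0 h0 mh hr /=; first by rewrite !big_ord0.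
have r0 i : (0 <= r i)%R.
  by rewrite -lee_fin -hr; apply: integral_ge0 => x _; rewrite lee_fin.
have E x : int_Rn (fun t => (c * \prod_(i < n.+1) h i (tnth (cons_tuple x t) i))%:E)
   = ((c * \prod_(i < n) r (lift ord0 i)) * h ord0 x)%:E.
  rewrite (_ : (fun t => _) = (fun t : n.-tuple R =>
     ((c * h ord0 x) * \prod_(i < n) h (lift ord0 i) (tnth t i))%:E)).
    rewrite (IH _ (fun i => h (lift ord0 i)) (fun i => r (lift ord0 i))) //.
    - by rewrite mulrAC.
    - by rewrite mulr_ge0.
  apply/funext => t; rewrite big_ord_recl mulrA; congr ((_ * _ * _)%:E).
  by apply: eq_bigr => i _; rewrite tnthS.
under eq_integral => x _ do rewrite E EFinM.
rewrite ge0_integralZl_EFin //.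
- rewrite (hr ord0) -EFinM big_ord_recl; congr (_%:E); ring.
all: try (by move=> x _; rewrite lee_fin).
all: try (by apply: mulr_ge0 => //; apply: prodr_ge0 => i _; exact: r0).
apply/measurable_EFinP; have := mh ord0; exact.
Qed.

End IntRn.

Section Gauss.
Context {R : realType}.

Lemma normal_pdfE' (m s x : R) : 0 < s ->
  normal_pdf m s x = normal_peak s * expR (- (x - m) ^+ 2 / (s ^+ 2 *+ 2)).
Proof. by move=> s0; rewrite /normal_pdf gt_eqF. Qed.

Lemma normal_peak_sqr (s : R) : 0 < s -> normal_peak s ^+ 2 = (s ^+ 2 * pi *+ 2)^-1.
Proof.
move=> s0; rewrite /normal_peak exprVn sqr_sqrtr //.
by rewrite mulrn_wge0 // mulr_ge0 ?sqr_ge0 ?pi_ge0.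
Qed.

Variables (v t2 : R).
Hypothesis v0 : 0 < v.
Hypothesis t20 : 0 < t2.

Definition ell (m x : R) : R := - (2 * v)^-1 * (x - m) ^+ 2 + (2 * t2)^-1 * x ^+ 2.

Lemma measurable_ell m : measurable_fun setT (ell m).
Proof.
apply: measurable_funD; apply: measurable_funM => //; apply: measurable_funX => //.
exact: measurable_funB.
Qed.

Lemma I1 (m x : R) :
  normal_pdf m (Num.sqrt v) x =
  normal_peak (Num.sqrt v) / normal_peak (Num.sqrt t2) * expR (ell m x) *
  normal_pdf 0 (Num.sqrt t2) x.
Proof.
rewrite !normal_pdfE' ?sqrtr_gt0 // !sqr_sqrtr ?ltW //.
have pt : normal_peak (Num.sqrt t2) != 0 by rewrite gt_eqF // normal_peak_gt0 // gt_eqF // sqrtr_gt0.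
set B := expR (- (x - 0) ^+ 2 / (t2 *+ 2)).
rewrite [RHS](_ : _ = normal_peak (Num.sqrt v) * (expR (ell m x) * B)); last by field.
rewrite /B -expRD; congr (_ * expR _).
rewrite /ell; field; apply/andP; split; apply: lt0r_neq0 => //.
Qed.

Variable s : R.
Hypothesis s0 : 0 < s.
Let D := (1 + s) * t2 - s * v.
Hypothesis D0 : 0 < D.
Definition nu2 := v * t2 / D.
Definition bm (m : R) := (1 + s) * m * t2 / D.
Definition cm (m : R) := (1 + s) * s * m ^+ 2 / (2 * D).

Lemma I2 (m x : R) :
  normal_pdf m (Num.sqrt v) x * expR (s * ell m x) =
  normal_peak (Num.sqrt v) / normal_peak (Num.sqrt nu2) * expR (cm m) *
  normal_pdf (bm m) (Num.sqrt nu2) x.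
Proof.
have nu0 : 0 < nu2 by rewrite /nu2 divr_gt0 // mulr_gt0.
rewrite !normal_pdfE' ?sqrtr_gt0 // !sqr_sqrtr ?ltW //.
have pt : normal_peak (Num.sqrt nu2) != 0 by rewrite gt_eqF // normal_peak_gt0 // gt_eqF // sqrtr_gt0.
rewrite -[LHS]mulrA -expRD.
set B := expR (- (x - bm m) ^+ 2 / (nu2 *+ 2)).
rewrite [RHS](_ : _ = normal_peak (Num.sqrt v) * (expR (cm m) * B)); last by field.
rewrite /B -expRD; congr (_ * expR _).
have Dn : D != 0 by apply: lt0r_neq0.
move: Dn; rewrite /ell /cm /bm /nu2 /D => Dn.
field.
by rewrite !lt0r_neq0.
Qed.

End Gauss.

Section Main.
Context {R : realType}.
Local Notation mu := (@lebesgue_measure R).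
Variables (v P delta : R).
Hypotheses (v0 : 0 < v) (P0 : 0 < P) (d0 : 0 < delta).
Variables (n : nat) (V : finType) (e : V -> n.-tuple R).
Hypothesis hpow : forall u, \sum_(i < n) (tnth (e u) i) ^+ 2 <= n%:R * P.

Let t2 := v + delta * v + P.
Let s := delta / 2.
Let D := (1 + s) * t2 - s * v.
Let sg := Num.sqrt v.
Let tau := Num.sqrt t2.
Let nu := Num.sqrt (nu2 v t2 s).
Let rho := normal_peak sg / normal_peak tau.
Let r1 := normal_peak sg / normal_peak nu.
Let w := awgn_ch v e.
Let Q (z : n.-tuple R) := \prod_(i < n) normal_pdf 0 tau (tnth z i).
Let L u (z : n.-tuple R) := \sum_(i < n) ell v t2 (tnth (e u) i) (tnth z i).
Let lam := (n%:R * delta ^+ 2 / 8 + n%:R * ln r1 + (1 + s) * s * (n%:R * P) / (2 * D)) / s.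
Let K := rho ^+ n * expR lam.
Let Tset u := [set z | L u z <= lam].

Let t20 : 0 < t2.
Proof. rewrite /t2; apply: addr_gt0 => //; apply: addr_gt0 => //; exact: mulr_gt0. Qed.
Let s0 : 0 < s.
Proof. by rewrite /s divr_gt0. Qed.
Let D0 : 0 < D.
Proof.
have -> : D = t2 + s * (delta * v + P) by rewrite /D /t2; ring.
by apply: addr_gt0 => //; apply: mulr_gt0 => //; apply: addr_gt0 => //; exact: mulr_gt0.
Qed.
Let nu20 : 0 < nu2 v t2 s.
Proof. by rewrite /nu2 divr_gt0 // mulr_gt0. Qed.
Let rho0 : 0 < rho.
Proof. by rewrite /rho divr_gt0 // normal_peak_gt0 // gt_eqF // sqrtr_gt0. Qed.
Let r10 : 0 < r1.
Proof. by rewrite /r1 divr_gt0 // normal_peak_gt0 // gt_eqF // sqrtr_gt0. Qed.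

Lemma P1 u z : w u z = rho ^+ n * expR (L u z) * Q z.
Proof.
rewrite /w /awgn_ch.
under eq_bigr => i _ do rewrite (@I1 _ v t2 v0 t20).
rewrite big_split big_split /= prodr_const card_ord /L expR_sum.
by [].
Qed.

Lemma P2 u z : w u z * expR (s * L u z) =
  \prod_(i < n) (normal_pdf (tnth (e u) i) sg (tnth z i) * expR (s * ell v t2 (tnth (e u) i) (tnth z i))).
Proof.
by rewrite /w /awgn_ch /L mulr_sumr expR_sum -big_split.
Qed.


Lemma meas_prodf (h : 'I_n -> R -> R) : (forall i, measurable_fun setT (h i)) ->
  measurable_fun setT (fun z : n.-tuple R => \prod_(i < n) h i (tnth z i)).
Proof.
move=> mh; apply: measurable_prod => i _.
exact: (measurableT_comp (mh i) (measurable_tnth i)).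
Qed.

Lemma meas_w u : measurable_fun setT (w u).
Proof.
apply: (meas_prodf (fun i => normal_pdf (tnth (e u) i) sg)) => i.
exact: measurable_normal_pdf.
Qed.

Lemma meas_Q : measurable_fun setT Q.
Proof.
apply: (meas_prodf (fun i => normal_pdf 0 tau)) => i.
exact: measurable_normal_pdf.
Qed.

Lemma meas_L u : measurable_fun setT (L u).
Proof.
apply: measurable_sum => i.
exact: (measurableT_comp (measurable_ell v t2 _) (measurable_tnth i)).
Qed.

Lemma meas_T u : measurable (Tset u).
Proof.
have := measurable_fun_ler (meas_L u) (measurable_cst lam) measurableT (Y := [set true]) I.
by rewrite setTI.
Qed.


Local Open Scope ereal_scope.

Lemma int_w u : int_Rn (fun z => (w u z)%:E) = 1.
Proof.
have := @int_Rn_prod R n 1 (fun i => normal_pdf (tnth (e u) i) sg) (fun _ => 1%R) ler01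
  (fun i x => normal_pdf_ge0 _ _ _) (fun i => measurable_normal_pdf _ _)
  (fun i => integral_normal_pdf _ _).
rewrite big1 // mulr1 => <-.
by congr int_Rn; apply/funext => z; rewrite mul1r.
Qed.

Lemma int_KQ : int_Rn (fun z => (K * Q z)%:E) = K%:E.
Proof.
have K0 : (0 <= K)%R by rewrite /K mulr_ge0 ?exprn_ge0 ?expR_ge0 // ltW.
have := @int_Rn_prod R n K (fun i => normal_pdf 0 tau) (fun _ => 1%R) K0
  (fun i x => normal_pdf_ge0 _ _ _) (fun i => measurable_normal_pdf _ _)
  (fun i => integral_normal_pdf _ _).
by rewrite big1 // mulr1.
Qed.

Let g u i x := (normal_pdf (tnth (e u) i) sg x * expR (s * ell v t2 (tnth (e u) i) x))%R.

Lemma meas_g u i : measurable_fun setT (g u i).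
Proof.
apply: measurable_funM; first exact: measurable_normal_pdf.
apply: measurableT_comp; first exact: measurable_expR.
apply: measurable_funM => //; exact: measurable_ell.
Qed.

Lemma g_ge0 u i x : (0 <= g u i x)%R.
Proof. by rewrite /g mulr_ge0 ?normal_pdf_ge0 ?expR_ge0. Qed.

Lemma int_g u i : \int[mu]_x (g u i x)%:E = (r1 * expR (cm v t2 s (tnth (e u) i)))%:E.
Proof.
under eq_integral => x _ do rewrite /g (@I2 _ v t2 v0 t20 s D0) EFinM.
rewrite ge0_integralZl_EFin //.
- by rewrite integral_normal_pdf mule1.
- by move=> x _; rewrite lee_fin normal_pdf_ge0.
- apply/measurable_EFinP; exact: measurable_normal_pdf.
- by rewrite mulr_ge0 ?expR_ge0 // ltW.
Qed.


Lemma aux_e (a b : \bar R) (c : R) : 0 <= a -> 0 <= b -> 1 = a + b -> b <= c%:E ->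
  (1 - c)%:E <= a.
Proof.
case: a => [a| |] //; case: b => [b| |] //=; rewrite ?lee_fin => a0 b0.
- move=> h bc; move: h; rewrite -?EFinD => -[] h; move: bc; rewrite ?lee_fin => bc.
  rewrite ?lee_fin; lra.
Qed.

Lemma indic_split (A : set (n.-tuple R)) z : (\1_A z + \1_(~` A) z = 1 :> R)%R.
Proof.
by rewrite !indicE in_setC; case: (z \in A); rewrite /= ?mulr1n ?mulr0n ?addr0 ?add0r.
Qed.

Lemma sum_cm u : (\sum_(i < n) cm v t2 s (tnth (e u) i) <= (1 + s) * s * (n%:R * P) / (2 * D))%R.
Proof.
have -> : (\sum_(i < n) cm v t2 s (tnth (e u) i) =
   ((1 + s) * s / (2 * D)) * \sum_(i < n) (tnth (e u) i) ^+ 2)%R.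
  by rewrite mulr_sumr; apply: eq_bigr => i _; rewrite /cm; ring.
rewrite [X in (_ <= X)%R](_ : _ = ((1 + s) * s / (2 * D)) * (n%:R * P))%R; last by ring.
apply: ler_wpM2l; last exact: hpow.
apply: divr_ge0; last by apply: mulr_ge0 => //; exact: ltW.
by apply: mulr_ge0; [apply: addr_ge0 => //; exact: ltW | exact: ltW].
Qed.

Lemma ch_bound u : ((1 - expR (- (n%:R * delta ^+ 2) / 8))%:E <= ch_prob w u (Tset u)).
Proof.
pose f1 := fun z => (\1_(Tset u) z * w u z)%R.
pose f2 := fun z => (\1_(~` Tset u) z * w u z)%R.
have mf1 : measurable_fun setT (fun z => (f1 z)%:E).
  apply/measurable_EFinP; apply: measurable_funM; last exact: meas_w.
  exact: measurable_indic (meas_T u).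
have mf2 : measurable_fun setT (fun z => (f2 z)%:E).
  apply/measurable_EFinP; apply: measurable_funM; last exact: meas_w.
  exact: measurable_indic (measurableC (meas_T u)).
have w0 z : (0 <= w u z)%R by rewrite /w /awgn_ch prodr_ge0 // => i _; exact: normal_pdf_ge0.
have f10 z : 0 <= (f1 z)%:E by rewrite lee_fin mulr_ge0.
have f20 z : 0 <= (f2 z)%:E by rewrite lee_fin mulr_ge0.
have H1 : 1 = int_Rn (fun z => (f1 z)%:E) + int_Rn (fun z => (f2 z)%:E).
  rewrite -int_Rn_add // -(int_w u); congr int_Rn; apply/funext => z.
  by rewrite /f1 /f2 -EFinD -mulrDl indic_split mul1r.
have H2 : int_Rn (fun z => (f2 z)%:E) <=
    (expR (- (s * lam)) * \prod_(i < n) (r1 * expR (cm v t2 s (tnth (e u) i))))%:E.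
  rewrite -(@int_Rn_prod R n _ (g u) _ (expR_ge0 _) (@g_ge0 u) (meas_g u) (int_g u)).
  apply: int_Rn_le => //.
    apply/measurable_EFinP; apply: measurable_funM; first exact: measurable_cst.
    by apply: meas_prodf => i; have := meas_g u i; exact.
  move=> z; rewrite /f2 lee_fin indicE in_setC.
  case: (boolP (z \in Tset u)) => hz /=.
    by rewrite mul0r mulr_ge0 ?expR_ge0 // prodr_ge0 // => i _; exact: g_ge0.
  rewrite mul1r.
  have hL : (lam < L u z)%R.
    by move: hz; rewrite notin_setE /Tset /= => /negP; rewrite -ltNge.
  have -> : (\prod_(i < n) g u i (tnth z i) = w u z * expR (s * L u z))%R by rewrite P2.
  rewrite mulrCA -expRD.
  rewrite -[X in (X <= _)%R]mulr1; apply: ler_wpM2l => //.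
  rewrite -expR0 ler_expR.
  have hp : (0 < L u z - lam)%R by rewrite subr_gt0.
  have := mulr_gt0 s0 hp; lra.
have H3 : (expR (- (s * lam)) * \prod_(i < n) (r1 * expR (cm v t2 s (tnth (e u) i)))
    <= expR (- (n%:R * delta ^+ 2) / 8))%R.
  rewrite big_split /= prodr_const card_ord -expR_sum.
  rewrite -[r1 in (r1 ^+ n)%R]lnK ?posrE // -expRM_natl -!expRD ler_expR.
  have -> : (s * lam = n%:R * delta ^+ 2 / 8 + n%:R * ln r1 + (1 + s) * s * (n%:R * P) / (2 * D))%R.
    by rewrite /lam mulrC divfK // gt_eqF.
  have := sum_cm u; lra.
apply: aux_e H1 _ => //.
- by apply: int_Rn_ge0.
- by apply: int_Rn_ge0.
- exact: le_trans H2 _.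
Qed.


Local Close Scope ereal_scope.

Lemma pi_neq0 : (pi : R) != 0.
Proof. by rewrite gt_eqF // pi_gt0. Qed.

Lemma rho_sqr : rho ^+ 2 = t2 / v.
Proof.
rewrite /rho expr_div_n !normal_peak_sqr ?sqrtr_gt0 // !sqr_sqrtr ?ltW //.
move: pi_neq0; move: (pi : R) => p hp.
by field; rewrite hp /= !gt_eqF.
Qed.

Lemma r1_sqr : r1 ^+ 2 = t2 / D.
Proof.
rewrite /r1 expr_div_n !normal_peak_sqr ?sqrtr_gt0 // !sqr_sqrtr ?ltW //.
move: pi_neq0; move: (pi : R) => p hp.
have Dn : D != 0 by rewrite gt_eqF.
move: Dn; rewrite /nu2 /D => Dn.
by field; rewrite hp Dn /= !gt_eqF.
Qed.

Lemma ln_rho : ln rho = ln (t2 / v) / 2.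
Proof. by rewrite -rho_sqr lnXn // mulr2n; field. Qed.

Lemma ln_r1 : ln r1 <= (t2 / D - 1) / 2.
Proof.
have : ln (r1 ^+ 2) <= t2 / D - 1.
  rewrite r1_sqr -[X in ln X](subrKC 1) le_ln1Dx //.
  have : 0 < t2 / D by rewrite divr_gt0.
  lra.
rewrite lnXn // mulr2n => h.
lra.
Qed.


Lemma key0 : (t2 / D - 1) / 2 + (1 + s) * s * P / (2 * D) <= delta ^+ 2 / 8.
Proof.
have Dn : D != 0 by rewrite gt_eqF.
have E : (t2 / D - 1) / 2 + (1 + s) * s * P / (2 * D) = delta ^+ 2 * (P - 2 * v) / (8 * D).
  have D2 : 0 < (2 + delta) * t2 - delta * v.
    have -> : (2 + delta) * t2 - delta * v = 2 * D by rewrite /D /s; field.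
    by rewrite mulr_gt0.
  move: Dn D2; rewrite /D /t2 /s => Dn D2; field.
  by rewrite gt_eqF.
rewrite E ler_pdivrMr ?mulr_gt0 //.
rewrite (_ : delta ^+ 2 / 8 * (8 * D) = delta ^+ 2 * D); last by field.
apply: ler_wpM2l; first exact: sqr_ge0.
have -> : D = t2 + s * (delta * v + P) by rewrite /D /t2; ring.
have : 0 < s * (delta * v + P) by apply: mulr_gt0 => //; apply: addr_gt0 => //; exact: mulr_gt0.
have : 0 < delta * v by exact: mulr_gt0.
rewrite /t2; move: (s * (delta * v + P)) => X; move: (delta * v) => Y; have := v0; lra.
Qed.

Lemma lam_bound : lam <= n%:R * delta / 2.
Proof.
rewrite /lam ler_pdivrMr //.
have hn : 0 <= n%:R :> R by [].
have h1 : n%:R * ln r1 <= n%:R * ((t2 / D - 1) / 2) by apply: ler_wpM2l => //; exact: ln_r1.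
have h2 : n%:R * ((t2 / D - 1) / 2 + (1 + s) * s * P / (2 * D)) <= n%:R * (delta ^+ 2 / 8).
  by apply: ler_wpM2l => //; exact: key0.
have e1 : (1 + s) * s * (n%:R * P) / (2 * D) = n%:R * ((1 + s) * s * P / (2 * D)) by ring.
have e2 : n%:R * delta / 2 * s = n%:R * (delta ^+ 2 / 4) by rewrite /s; field.
rewrite e1 e2.
have e3 : n%:R * ((t2 / D - 1) / 2 + (1 + s) * s * P / (2 * D)) =
   n%:R * ((t2 / D - 1) / 2) + n%:R * ((1 + s) * s * P / (2 * D)) by ring.
rewrite e3 in h2.
have e4 : n%:R * (delta ^+ 2 / 4) = n%:R * (delta ^+ 2 / 8) + n%:R * (delta ^+ 2 / 8) by field.
have e5 : n%:R * delta ^+ 2 / 8 = n%:R * (delta ^+ 2 / 8) by ring.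
rewrite e4 e5; lra.
Qed.

Lemma lnK_eq : ln K = n%:R * ln rho + lam.
Proof.
by rewrite /K lnM ?posrE ?exprn_gt0 ?expR_gt0 // lnXn // expRK mulr_natl.
Qed.

Lemma final_real : ln K / ln 2 <=
  n%:R / 2 * log2 (1 + delta + P / v) + n%:R * delta * log2 (expR 1) / 2.
Proof.
have l2 : 0 < ln (2 : R) by rewrite ln_gt0 // ltr1n.
rewrite /log2 expRK.
have -> : n%:R / 2 * (ln (1 + delta + P / v) / ln 2) + n%:R * delta * (1 / ln 2) / 2 =
  (n%:R / 2 * ln (1 + delta + P / v) + n%:R * delta / 2) / ln 2.
  by field; rewrite gt_eqF.
apply: ler_wpM2r; first by rewrite invr_ge0 ltW.
rewrite lnK_eq ln_rho.
have -> : t2 / v = 1 + delta + P / v by rewrite /t2; field; rewrite gt_eqF.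
have := lam_bound; lra.
Qed.


Lemma meas_bigmax_seq (I : Type) (r : seq I) (F : I -> n.-tuple R -> R) :
  (forall i, measurable_fun setT (F i)) ->
  measurable_fun setT (fun z => \big[Num.max/0]_(i <- r) F i z).
Proof.
move=> mF; elim: r => [|a r IH].
  by under eq_fun do rewrite big_nil; exact: measurable_cst.
under eq_fun do rewrite big_cons.
exact: measurable_maxr.
Qed.

Local Open Scope ereal_scope.

Lemma Imax_bound : Imax (restr_ch w Tset) <= (ln K / ln 2)%:E.
Proof.
rewrite /Imax /restr_ch.
have K0 : (0 < K)%R by rewrite /K mulr_gt0 ?exprn_gt0 ?expR_gt0.
have Q0 z : (0 <= Q z)%R by rewrite /Q prodr_ge0 // => i _; exact: normal_pdf_ge0.
have w0 u z : (0 <= w u z)%R by rewrite /w /awgn_ch prodr_ge0 // => i _; exact: normal_pdf_ge0.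
set I := int_Rn _.
have hI : I <= K%:E.
  rewrite -int_KQ; apply: int_Rn_le.
  - apply/measurable_EFinP; apply: meas_bigmax_seq => u.
    apply: measurable_funM; last exact: meas_w.
    exact: measurable_indic (meas_T u).
  - apply/measurable_EFinP; apply: measurable_funM; first exact: measurable_cst.
    exact: meas_Q.
  - move=> z; rewrite lee_fin.
    apply: (big_ind (fun x => 0 <= x)%R) => //.
      by move=> x y hx hy; rewrite le_max hx.
    by move=> u _; rewrite mulr_ge0 // indicE.
  - move=> z; rewrite lee_fin; apply: bigmax_le; first by rewrite mulr_ge0 // ltW.
    move=> u _; rewrite indicE; case: (boolP (z \in Tset u)) => hz /=.
      rewrite mul1r P1 /K; apply: ler_wpM2r => //.
      apply: ler_wpM2l; first by rewrite exprn_ge0 // ltW.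
      rewrite ler_expR; move: hz; rewrite inE; exact.
    by rewrite mul0r mulr_ge0 // ltW.
have I0 : 0 <= I by apply: int_Rn_ge0 => z; rewrite lee_fin; apply: (big_ind (fun x => 0 <= x)%R) => //;
  [move=> x y hx hy; rewrite le_max hx | move=> u _; rewrite mulr_ge0 // indicE].
move: I hI I0 => [r| |] //= hI I0.
case: ifP => r0; last exact: leNye.
have l2 : (0 < ln (2 : R))%R by rewrite ln_gt0 // ltr1n.
rewrite lee_fin /log2; apply: ler_wpM2r; first by rewrite invr_ge0 ltW.
by rewrite ler_ln ?posrE // -lee_fin.
Qed.

Lemma main_n : smooth_Imax (expR (- (n%:R * delta ^+ 2) / 8)) w <=
  (n%:R / 2 * log2 (1 + delta + P / v) + n%:R * delta * log2 (expR 1) / 2)%:E.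
Proof.
apply: le_trans (_ : (ln K / ln 2)%:E <= _); last by rewrite lee_fin; exact: final_real.
apply: le_trans Imax_bound.
apply: ereal_inf_lbound; exists Tset => //; split => u.
- exact: meas_T.
- exact: ch_bound.
Qed.

End Main.

Theorem lemma6 (R : realType) (sigma2 P : R) (hsigma : 0 < sigma2) (hP : 0 < P)
  (l : nat -> nat) (e : forall n : nat, (l n).-tuple bool -> n.-tuple R)
  (hpow : forall (n : nat) (v : (l n).-tuple bool),
      n%:R^-1 * \sum_(i < n) (tnth (e n v) i) ^+ 2 <= P)
  (delta : R) (hdelta : 0 < delta < 2^-1) :
  exists g : nat -> R,
    (fun n : nat => g n / n%:R) @ \oo --> 0 /\
    \forall n \near \oo,
      (smooth_Imax (expR (- (n%:R * delta ^+ 2) / 8)) (awgn_ch sigma2 (e n))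
       <= (n%:R / 2 * log2 (1 + delta + P / sigma2)
           + n%:R * delta * log2 (expR 1) / 2 + g n)%:E)%E.
Proof.
have d0 : 0 < delta by case/andP: hdelta.
have hp' : forall k (u : (l k).-tuple bool), \sum_(i < k) (tnth (e k u) i) ^+ 2 <= k%:R * P.
  case=> [|k] u; first by rewrite big_ord0 mul0r.
  by have := hpow k.+1 u; rewrite ler_pdivrMl // ltr0Sn.
exists (fun _ => 0); split.
  have -> : (fun n : nat => (0:R) / n%:R) = (fun _ => (0 : R)) by apply/funext => k; rewrite mul0r.
  first [ apply: cvg_cst | exact: (cvg_cst (0:R^o)) | apply: (@cvg_cst R^o) ].
apply: nearW => k; rewrite addr0.
exact: (@main_n R sigma2 P delta hsigma hP d0 k _ (e k) (hp' k)).
Qed.
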